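(* Let $\tau_1,\tau_2\in S_n$ both avoid the patterns $132$ and $123$. Then $\tau_1\circ\tau_2$ is $1$-almost-increasing.
   Context: Permutations $\pi\in S_n$ are viewed as bijections of $\{1,\dots,n\}$ and written in one-line form $[\pi(1)\cdots\pi(n)]$; $(\tau_1\circ\tau_2)(i)=\tau_1(\tau_2(i))$. A permutation $\pi\in S_n$ is $1$-almost-increasing if for every $i\in\{1,\dots,n\}$ there is at most one $j\le i$ with $\pi_j>i$; equivalently, $\pi$ avoids the patterns $4321$, $4312$, $3421$ and $3412$. *)

(* Defs.v *)
From mathcomp Require Import all_boot all_fingroup.
Set Implicit Arguments. Unset Strict Implicit. Unset Printing Implicit Defensive.

(* Permutations of {1..n} are modelled as {perm 'I_n}, i.e. bijections of
   {0..n-1}; position i+1 / value v+1 in the paper corresponds to i / v here. *)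

(* Function composition (t1 o t2)(i) = t1 (t2 i), as in the paper. *)
Definition perm_comp n (t1 t2 : {perm 'I_n}) : {perm 'I_n} := (t2 * t1)%g.

(* pi contains the pattern p (a permutation of 1..k in one-line form, as a
   seq nat): there are positions i_1 < ... < i_k whose values are
   order-isomorphic to p. *)
Definition contains_pattern n (pi : {perm 'I_n}) (p : seq nat) : Prop :=
  exists f : 'I_(size p) -> 'I_n,
    (forall a b : 'I_(size p), (a < b)%N -> (f a < f b)%N) /\
    (forall a b : 'I_(size p),
        (pi (f a) < pi (f b))%N = (nth 0 p a < nth 0 p b)%N).

Definition avoids n (pi : {perm 'I_n}) (p : seq nat) : Prop :=
  ~ contains_pattern pi p.

Definition almost_increasing1 n (pi : {perm 'I_n}) : Prop :=
  forall i : 'I_n, #|[set j : 'I_n | (j <= i)%N && (i < pi j)%N]| <= 1.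

(* Main.v *)
Require Import Defs.
From mathcomp Require Import all_boot all_fingroup.
From mathcomp Require Import zify.

Lemma noQ n (t : {perm 'I_n}) : avoids t [:: 1; 3; 2] -> avoids t [:: 1; 2; 3] ->
  forall a b c : 'I_n, (a < b)%N -> (b < c)%N -> (t a < t b)%N -> (t a < t c)%N -> False.
Proof.
move=> A1 A2 a b c ab bc tab tac.
pose f (k : 'I_3) : 'I_n := nth a [:: a; b; c] k.
have fmono : forall x y : 'I_3, (x < y)%N -> (f x < f y)%N.
  move=> [[|[|[|?]]] ?] [[|[|[|?]]] ?] //= _; rewrite /f /=; lia.
case: (ltnP (t b) (t c)) => hbc.
- apply: A2; exists f; split; first exact: fmono.
  move=> [[|[|[|?]]] ?] [[|[|[|?]]] ?] //=; rewrite /f /=; lia.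
- have hbc' : (t c < t b)%N.
    rewrite ltn_neqAle hbc andbT; apply/eqP => /val_inj /perm_inj E.
    by move: bc; rewrite E ltnn.
  apply: A1; exists f; split; first exact: fmono.
  move=> [[|[|[|?]]] ?] [[|[|[|?]]] ?] //=; rewrite /f /=; lia.
Qed.

Lemma noQ' n (t : {perm 'I_n}) : avoids t [:: 1; 3; 2] -> avoids t [:: 1; 2; 3] ->
  forall a b c : 'I_n, (a < b)%N -> (a < c)%N -> b != c ->
   (t a < t b)%N -> (t a < t c)%N -> False.
Proof.
move=> A1 A2 a b c ab ac bc tab tac.
case: (ltngtP b c) => h.
- exact: (@noQ n t A1 A2 _ _ _ ab h tab tac).
- exact: (@noQ n t A1 A2 _ _ _ ac h tac tab).
- by move: bc; rewrite (val_inj h) eqxx.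
Qed.

Theorem proposition7p2 (n : nat) (t1 t2 : {perm 'I_n}) :
  avoids t1 [:: 1; 3; 2] -> avoids t1 [:: 1; 2; 3] ->
  avoids t2 [:: 1; 3; 2] -> avoids t2 [:: 1; 2; 3] ->
  almost_increasing1 (perm_comp t1 t2).
Proof.
move=> A1 B1 A2 B2 i.
set p := perm_comp t1 t2.
have pE : forall k, p k = t1 (t2 k) by move=> k; rewrite /p /perm_comp permM.
set L := [set j : 'I_n | (j <= i)%N].
set P := p @^-1: L.
have ES : [set j : 'I_n | (j <= i)%N && (i < p j)%N] = L :\: P.
  by apply/setP => j; rewrite !inE -ltnNge andbC.
rewrite ES leqNgt; apply/negP => HS.
have HT : (1 < #|P :\: L|)%N.
  have h1 := cardsID P L. have h2 := cardsID L P.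
  have h3 : #|P| = #|L| by rewrite card_preimset //; exact: perm_inj.
  rewrite setIC in h2. move: h1 h2 h3 HS. clear. move=> h1 h2 h3 HS. have E : #|P :\: L| = #|L :\: P| by apply: (@addnI #|L :&: P|); rewrite h1 h2 h3. by rewrite E.
have two : forall A : {set 'I_n}, (1 < #|A|)%N ->
    exists a b : 'I_n, [/\ a \in A, b \in A & (a < b)%N].
  move=> A /card_gt1P [a [b [ha hb ab]]].
  case: (ltngtP a b) => h.
  - by exists a, b.
  - by exists b, a.
  - by move: ab; rewrite (val_inj h) eqxx.
have [j1 [j2 [hj1 hj2 j12]]] := two _ HS.
have [k1 [k2 [hk1 hk2 k12]]] := two _ HT.
move: hj1 hj2 hk1 hk2; rewrite !inE !pE.
move=> /andP [hj1 hj1'] /andP [hj2 hj2'] /andP [hk1 hk1'] /andP [hk2 hk2'].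
rewrite -ltnNge in hj1. rewrite -ltnNge in hj2. rewrite -ltnNge in hk1. rewrite -ltnNge in hk2.
have F1 : forall y x1 x2 : 'I_n, (t1 y <= i)%N -> (i < t1 x1)%N -> (i < t1 x2)%N -> x1 != x2 ->
     ~ ((y < x1)%N /\ (y < x2)%N).
  move=> y x1 x2 hy h1 h2 hne [l1 l2].
  apply: (@noQ' n t1 A1 B1 y x1 x2 l1 l2 hne); lia.
have ne12 : t2 j1 != t2 j2.
  by apply/eqP => /perm_inj E; move: j12; rewrite E ltnn.
have G1 := F1 _ _ _ hk1' hj1 hj2 ne12.
have G2 := F1 _ _ _ hk2' hj1 hj2 ne12.
have D : forall a b : 'I_n, (a < b)%N -> (t2 a != t2 b :> nat).
  by move=> a b ab; apply/eqP => /val_inj /perm_inj E; move: ab; rewrite E ltnn.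
have Q := @noQ' n t2 A2 B2.
have Q2 : forall a b c : 'I_n, (a < b)%N -> (a < c)%N -> (b < c)%N ->
   ~ ((t2 a < t2 b)%N /\ (t2 a < t2 c)%N).
  move=> a b c ab ac bc [u v]; apply: (Q a b c ab ac _ u v).
  by apply/eqP => E; move: bc; rewrite E ltnn.
have jk1 : (j2 < k1)%N by lia.
have H1 := Q2 j1 j2 k1 j12 (ltn_trans j12 jk1) jk1.
have H2 := Q2 j1 j2 k2 j12 (ltn_trans j12 (ltn_trans jk1 k12)) (ltn_trans jk1 k12).
have H3 := Q2 j1 k1 k2 (ltn_trans j12 jk1) (ltn_trans j12 (ltn_trans jk1 k12)) k12.
have H4 := Q2 j2 k1 k2 jk1 (ltn_trans jk1 k12) k12.
have d1 := D _ _ j12.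
have d2 := D _ _ (ltn_trans j12 jk1).
have d3 := D _ _ (ltn_trans j12 (ltn_trans jk1 k12)).
have d4 := D _ _ jk1.
have d5 := D _ _ (ltn_trans jk1 k12).
have d6 := D _ _ k12.
lia.
Qed.
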